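(* For any function $\varphi:\mathbb{Z}_{\ge 0}\to\mathbb{R}$ that is concave and nondecreasing with $\varphi(0)=0$, the Poisson concavity ratio satisfies $\alpha_\varphi\ge 1-\frac{1}{e}$.
   Context: A function $\varphi:\mathbb{Z}_{\ge0}\to\mathbb{R}$ is concave if $\varphi(x+1)-\varphi(x)$ is nonincreasing in $x$. The Poisson concavity ratio is $\alpha_\varphi=\inf_{x\in\mathbb{Z}_{\ge1}}\alpha_\varphi(x)$ where $\alpha_\varphi(x)=\frac{\mathbb{E}_{X\sim\mathrm{Pois}(x)}[\varphi(X)]}{\varphi(x)}$ (defined when $\varphi(x)>0$ for positive integers $x$). *)

(* Defs.v *)
From Stdlib Require Import Reals.
From Coquelicot Require Import Coquelicot.
Open Scope R_scope.

Definition concave_nat (phi : nat -> R) : Prop :=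
  forall x : nat, phi (S (S x)) - phi (S x) <= phi (S x) - phi x.

Definition nondecreasing_nat (phi : nat -> R) : Prop :=
  forall x : nat, phi x <= phi (S x).

Definition poisson_expect (phi : nat -> R) (x : R) : R :=
  Series (fun k : nat => exp (- x) * x ^ k / INR (Factorial.fact k) * phi k).

Definition alpha_at (phi : nat -> R) (x : nat) : R :=
  poisson_expect phi (INR x) / phi x.

Definition alpha (phi : nat -> R) : Rbar :=
  Glb_Rbar (fun r : R => exists x : nat, (1 <= x)%nat /\ r = alpha_at phi x).

(* Main.v *)
Require Import Defs.
From Stdlib Require Import Reals Lra Lia Arith.
From Coquelicot Require Import Coquelicot.
Open Scope R_scope.
Lemma exp_series (y : R) : is_series (fun k => y ^ k / INR (Factorial.fact k)) (exp y).
Proof.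
  eapply is_series_ext; [|apply (is_exp_Reals y)].
  intro k. cbv beta. rewrite pow_n_pow. reflexivity.
Qed.

Lemma sum_stab (c : nat -> R) m : (forall k, (m < k)%nat -> c k = 0) ->
  forall d, sum_f_R0 c (m + d) = sum_f_R0 c m.
Proof.
  intros H d; induction d as [|d IH].
  - now rewrite Nat.add_0_r.
  - rewrite Nat.add_succ_r. simpl. rewrite IH, H by lia. ring.
Qed.

Lemma finite_series (c : nat -> R) m : (forall k, (m < k)%nat -> c k = 0) ->
  is_series c (sum_f_R0 c m).
Proof.
  intros H. apply is_series_Reals. intros eps He. exists m. intros N HN.
  replace N with (m + (N - m))%nat by lia. rewrite sum_stab by exact H.
  rewrite R_dist_eq. lra.
Qed.

Lemma sum_id (x : R) m : sum_f_R0 (fun k => (x - INR k) * (x ^ k / INR (Factorial.fact k))) m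
   = x ^ (S m) / INR (Factorial.fact m).
Proof.
  induction m as [|m IH].
  - simpl. field.
  - rewrite tech5; cbv beta. rewrite IH. rewrite fact_simpl, mult_INR, (S_INR m).
    assert (H1 := INR_fact_neq_0 m). assert (H2 : INR m + 1 <> 0) by (pose proof (pos_INR m); lra).
    simpl pow. field. split; auto.
Qed.

Lemma exp_pow_lem (y : R) k : exp y ^ k = exp (INR k * y).
Proof.
  induction k as [|k IH].
  - simpl. rewrite Rmult_0_l, exp_0. reflexivity.
  - simpl pow. rewrite IH, S_INR, <- exp_plus. f_equal. ring.
Qed.

Lemma ratio m : (INR m + 1) ^ m / INR (Factorial.fact m) <= exp (INR m).
Proof.
  induction m as [|m IH].
  - simpl. rewrite exp_0. lra.
  - set (a := INR m + 1) in *.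
    assert (Ha : 0 < a) by (unfold a; pose proof (pos_INR m); lra).
    assert (Hf := INR_fact_neq_0 m). assert (Hfp := INR_fact_lt_0 m).
    assert (E : (INR (S m) + 1) ^ S m / INR (Factorial.fact (S m))
              = (a ^ m / INR (Factorial.fact m)) * ((a + 1) / a) ^ (S m)).
    { rewrite S_INR. fold a. rewrite fact_simpl, mult_INR, S_INR. fold a.
      replace (a+1) with (((a+1)/a) * a) at 1 by (field; lra).
      rewrite Rpow_mult_distr. simpl (a ^ S m). field. split; lra. }
    rewrite E.
    assert (B : ((a + 1) / a) ^ S m <= exp 1).
    { replace (exp 1) with (exp (1/a) ^ S m).
      2:{ rewrite exp_pow_lem. f_equal. unfold a. rewrite S_INR. field. pose proof (pos_INR m); lra. }
      apply pow_incr. split.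
      - apply Rlt_le, Rdiv_lt_0_compat; lra.
      - replace ((a+1)/a) with (1 + 1/a) by (field; lra).
        left. apply exp_ineq1. apply Rgt_not_eq, Rdiv_lt_0_compat; lra. }
    rewrite S_INR, exp_plus.
    apply Rmult_le_compat; auto.
    + apply Rlt_le, Rdiv_lt_0_compat; auto. apply pow_lt; lra.
    + apply pow_le. apply Rlt_le, Rdiv_lt_0_compat; lra.
Qed.

Lemma delta_mono phi : concave_nat phi -> forall j d,
  phi (S (j + d)) - phi (j + d)%nat <= phi (S j) - phi j.
Proof.
  intros Hc j d; induction d as [|d IH].
  - rewrite Nat.add_0_r; lra.
  - rewrite Nat.add_succ_r. pose proof (Hc (j + d)%nat). lra.
Qed.

Lemma phi_ge phi : concave_nat phi -> phi 0%nat = 0 -> forall k,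
  INR k * (phi (S k) - phi k) <= phi k.
Proof.
  intros Hc H0 k; induction k as [|k IH].
  - simpl. lra.
  - pose proof (Hc k). pose proof (pos_INR k). rewrite S_INR.
    assert ((INR k + 1) * (phi (S (S k)) - phi (S k)) <= (INR k + 1) * (phi (S k) - phi k))
      by (apply Rmult_le_compat_l; lra).
    lra.
Qed.

Lemma phi_ratio phi : concave_nat phi -> phi 0%nat = 0 -> forall k d,
  INR k * phi (k + d)%nat <= INR (k + d) * phi k.
Proof.
  intros Hc H0 k d; induction d as [|d IH].
  - rewrite Nat.add_0_r; lra.
  - rewrite Nat.add_succ_r.
    destruct (Nat.eq_dec (k + d) 0) as [Hz|Hz].
    + assert (k = 0%nat) by lia. subst k. simpl. rewrite H0. lra.
    + assert (Hp : 0 < INR (k + d)) by (apply lt_0_INR; lia).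
      pose proof (phi_ge phi Hc H0 (k + d)) as L.
      rewrite S_INR.
      assert (A : INR k * (INR (k+d) * phi (S (k + d))) <= INR k * ((INR (k+d) + 1) * phi (k+d)%nat)).
      { apply Rmult_le_compat_l. apply pos_INR. lra. }
      assert (B : (INR (k+d) + 1) * (INR k * phi (k + d)%nat) <= (INR (k+d) + 1) * (INR (k + d) * phi k)).
      { apply Rmult_le_compat_l. lra. exact IH. }
      apply (Rmult_le_reg_l (INR (k + d))); auto. nra.
Qed.

Lemma phi_lin phi : concave_nat phi -> phi 0%nat = 0 -> forall k,
  phi k <= INR k * phi 1%nat.
Proof.
  intros Hc H0 k; induction k as [|k IH].
  - simpl. lra.
  - pose proof (delta_mono phi Hc 0 k). simpl (0 + k)%nat in H. rewrite S_INR. lra.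
Qed.

Lemma pow2 k : INR k <= 2 ^ k.
Proof.
  induction k as [|k IH].
  - simpl; lra.
  - rewrite S_INR. simpl. pose proof (pow_R1_Rle 2 k). lra.
Qed.

Theorem mainTheorem2 (phi : nat -> R) :
  concave_nat phi ->
  nondecreasing_nat phi ->
  phi 0%nat = 0 ->
  (forall x : nat, (1 <= x)%nat -> 0 < phi x) ->
  Rbar_le (Finite (1 - exp (-1))) (alpha phi).
Proof.
  intros Hc Hm H0 Hpos.
  unfold alpha. destruct (Glb_Rbar_correct (fun r : R => exists x : nat, (1 <= x)%nat /\ r = alpha_at phi x)) as [_ Hglb].
  apply Hglb. intros r [n [Hn ->]]. simpl.
  destruct n as [|m]; [lia|].
  unfold alpha_at, poisson_expect.
  set (x := INR (S m)).
  assert (Hx : x = INR m + 1) by (unfold x; apply S_INR).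
  assert (Hxp : 0 < x) by (pose proof (pos_INR m); lra).
  set (N := S m) in *.
  assert (HphiN : 0 < phi N) by (apply Hpos; unfold N; lia).
  assert (Hnn : forall k, 0 <= phi k).
  { intro k. destruct k. rewrite H0; lra. left; apply Hpos; lia. }
  set (p := fun k => exp (- x) * x ^ k / INR (Factorial.fact k)).
  assert (Hp0 : forall k, 0 <= p k).
  { intro k. unfold p. apply Rmult_le_pos. apply Rmult_le_pos. left; apply exp_pos.
    apply pow_le; lra. left; apply Rinv_0_lt_compat, INR_fact_lt_0. }
  set (a := fun k => exp (- x) * x ^ k / INR (Factorial.fact k) * phi k).
  assert (Hexa : ex_series a).
  { apply (@ex_series_le R_AbsRing R_CompleteNormedModule _ (fun k => exp (- x) * phi 1%nat * ((2 * x) ^ k / INR (Factorial.fact k)))).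
    - intro k. change norm with Rabs. rewrite Rabs_pos_eq.
      2:{ unfold a. apply Rmult_le_pos; [apply (Hp0 k)|apply Hnn]. }
      unfold a. rewrite Rpow_mult_distr.
      pose proof (phi_lin phi Hc H0 k). pose proof (pow2 k).
      assert (phi k <= 2 ^ k * phi 1%nat).
      { apply Rle_trans with (INR k * phi 1%nat); auto. apply Rmult_le_compat_r; auto. }
      replace (exp (- x) * x ^ k / INR (Factorial.fact k) * phi k) with (p k * phi k) by reflexivity.
      replace (exp (- x) * phi 1%nat * (2 ^ k * x ^ k / INR (Factorial.fact k))) with (p k * (2 ^ k * phi 1%nat))
        by (unfold p; field; apply INR_fact_neq_0).
      apply Rmult_le_compat_l; auto.
    - eexists. eapply is_series_ext; [|apply (@is_series_scal R_AbsRing R_NormedModule (exp (- x) * phi 1%nat) _ _ (exp_series (2 * x)))]. intro k. reflexivity. }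
  assert (Hsp : is_series p 1).
  { replace 1 with (exp (- x) * exp x) by (rewrite <- exp_plus; replace (- x + x) with 0 by ring; apply exp_0).
    eapply is_series_ext; [|apply (is_series_scal (exp (- x)) _ _ (exp_series x))].
    intro k. unfold p. simpl. change (scal (exp (- x)) (x ^ k / INR (Factorial.fact k))) with
      (exp (- x) * (x ^ k / INR (Factorial.fact k))). unfold Rdiv. ring. }
  set (c := fun k => Rmax 0 (x - INR k) * p k).
  assert (Hsc : is_series c (sum_f_R0 c m)).
  { apply finite_series. intros k Hk. unfold c. rewrite Rmax_left. ring.
    assert (INR N <= INR k) by (apply le_INR; unfold N; lia). fold x in H. lra. }
  assert (HC : sum_f_R0 c m = exp (- x) * (x ^ (S m) / INR (Factorial.fact m))).
  { rewrite <- sum_id, scal_sum. apply sum_eq. intros i Hi. unfold c, p.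
    rewrite Rmax_right. unfold Rdiv. ring.
    assert (INR i <= INR m) by (apply le_INR; lia). lra. }
  set (b := fun k => phi N * p k - (phi N / x) * c k).
  assert (Hsb : is_series b (phi N * 1 - (phi N / x) * sum_f_R0 c m)).
  { apply (is_series_minus _ _ _ _ (is_series_scal (phi N) _ _ Hsp) (is_series_scal (phi N / x) _ _ Hsc)). }
  assert (Hba : forall k, 0 <= b k <= a k).
  { intro k. unfold b, a, c.
    replace (exp (- x) * x ^ k / INR (Factorial.fact k) * phi k) with (p k * phi k) by reflexivity.
    replace (phi N * p k - phi N / x * (Rmax 0 (x - INR k) * p k))
      with (p k * (phi N - phi N / x * Rmax 0 (x - INR k))) by (field; lra).
    assert (G : 0 <= phi N - phi N / x * Rmax 0 (x - INR k) <= phi k).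
    { destruct (le_lt_dec k N) as [Hk|Hk].
      - rewrite Rmax_right.
        2:{ assert (INR k <= INR N) by (apply le_INR; lia). fold x in H. lra. }
        replace (phi N - phi N / x * (x - INR k)) with (INR k * phi N / x) by (field; lra).
        split.
        + apply Rmult_le_pos. apply Rmult_le_pos; [apply pos_INR|lra].
          left; apply Rinv_0_lt_compat; lra.
        + apply Rle_div_l; auto.
          pose proof (phi_ratio phi Hc H0 k (N - k)) as R.
          replace (k + (N - k))%nat with N in R by lia. fold x in R. lra.
      - rewrite Rmax_left.
        2:{ assert (INR N <= INR k) by (apply le_INR; lia). fold x in H. lra. }
        rewrite Rmult_0_r, Rminus_0_r. split; [lra|].
        replace k with (N + (k - N))%nat by lia.
        clear -Hm. induction (k - N)%nat as [|d IH].
        + rewrite Nat.add_0_r; lra.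
        + rewrite Nat.add_succ_r. pose proof (Hm (N + d)%nat). lra. }
    split.
    - apply Rmult_le_pos; auto. apply G.
    - apply Rmult_le_compat_l; auto. apply G. }
  assert (Key : phi N * 1 - (phi N / x) * sum_f_R0 c m <= Series a).
  { rewrite <- (is_series_unique _ _ Hsb). apply Series_le; auto. }
  rewrite HC in Key.
  assert (Rat := ratio m).
  assert (Q : exp (- x) * (x ^ S m / INR (Factorial.fact m)) / x <= exp (-1)).
  { replace (exp (- x) * (x ^ S m / INR (Factorial.fact m)) / x)
      with (exp (- x) * (x ^ m / INR (Factorial.fact m))).
    2:{ simpl pow. field. split; [apply INR_fact_neq_0|lra]. }
    rewrite Hx in *. replace (exp (-1)) with (exp (- (INR m + 1)) * exp (INR m)).
    2:{ rewrite <- exp_plus. f_equal. ring. }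
    apply Rmult_le_compat_l; [left; apply exp_pos|exact Rat]. }
  apply Rle_div_r; auto.
  assert (phi N * (exp (- x) * (x ^ S m / INR (Factorial.fact m)) / x) <= phi N * exp (-1))
    by (apply Rmult_le_compat_l; lra).
  replace (phi N / x * (exp (- x) * (x ^ S m / INR (Factorial.fact m))))
    with (phi N * (exp (- x) * (x ^ S m / INR (Factorial.fact m)) / x)) in Key by (field; split; [apply INR_fact_neq_0|lra]).
  fold a. lra.
Qed.
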